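(* Let $M:=\mathbb R^2\setminus\{(0,0)\}$, fix $\lambda>0$, and let $\gamma:(0,1]\to M$, $\gamma(t)=(t,\lambda e^{-1/t})$, and $\alpha:(0,1]\to M$, $\alpha(t)=(t,0)$. Then: (1) for every $f\in\mathcal S^*(M)$ the limit $\lim_{t\to0^+}f(\gamma(t))$ exists in $\mathbb R$; (2) $\mathfrak m^*:=\{f\in\mathcal S^*(M):\lim_{t\to0^+}f(\gamma(t))=0\}$ is a maximal ideal of $\mathcal S^*(M)$; (3) $\mathfrak m^*=\mathfrak m^*_\alpha:=\{f\in\mathcal S^*(M):\lim_{t\to0^+}f(t,0)=0\}$.
   Context: $\mathcal S^*(M)$ denotes the ring of bounded continuous semialgebraic functions $M\to\mathbb R$ (functions whose graph is a semialgebraic set). *)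

(* Defs.v *)
From Stdlib Require Import Reals Lra.
Open Scope R_scope.

Inductive poly3 : Type :=
| PX | PY | PZ
| PConst (c : R)
| PAdd (p q : poly3)
| PMul (p q : poly3)
| PNeg (p : poly3).

Fixpoint peval (p : poly3) (x y z : R) : R :=
  match p with
  | PX => x | PY => y | PZ => z
  | PConst c => c
  | PAdd p q => peval p x y z + peval q x y z
  | PMul p q => peval p x y z * peval q x y z
  | PNeg p => - peval p x y z
  end.

Inductive sa_formula : Type :=
| FPos (p : poly3)
| FZero (p : poly3)
| FAnd (a b : sa_formula)
| FOr (a b : sa_formula)
| FNot (a : sa_formula).

Fixpoint feval (f : sa_formula) (x y z : R) : Prop :=
  match f with
  | FPos p => 0 < peval p x y z
  | FZero p => peval p x y z = 0
  | FAnd a b => feval a x y z /\ feval b x y z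
  | FOr a b => feval a x y z \/ feval b x y z
  | FNot a => ~ feval a x y z
  end.

Definition semialgebraic3 (S : R -> R -> R -> Prop) : Prop :=
  exists phi : sa_formula, forall x y z, S x y z <-> feval phi x y z.

Definition M : Type := { p : R * R | p <> (0, 0) }.

Definition Mx (p : M) : R := fst (proj1_sig p).
Definition My (p : M) : R := snd (proj1_sig p).

Definition dist2 (p q : M) : R :=
  sqrt ((Mx p - Mx q) ^ 2 + (My p - My q) ^ 2).

Definition continuous_M (f : M -> R) : Prop :=
  forall p eps, 0 < eps -> exists delta, 0 < delta /\
    forall q, dist2 p q < delta -> Rabs (f q - f p) < eps.

Definition bounded_M (f : M -> R) : Prop :=
  exists C, forall p, Rabs (f p) <= C.

Definition graph_M (f : M -> R) (x y z : R) : Prop :=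
  exists H : (x, y) <> (0, 0), z = f (exist _ (x, y) H).

Definition semialgebraic_fun (f : M -> R) : Prop :=
  semialgebraic3 (graph_M f).

Definition Sstar (f : M -> R) : Prop :=
  continuous_M f /\ bounded_M f /\ semialgebraic_fun f.

Definition is_ideal (I : (M -> R) -> Prop) : Prop :=
  (forall f, I f -> Sstar f) /\
  I (fun _ => 0) /\
  (forall f g, I f -> I g -> I (fun p => f p + g p)) /\
  (forall f g, Sstar g -> I f -> I (fun p => g p * f p)).

Definition is_maximal_ideal (I : (M -> R) -> Prop) : Prop :=
  is_ideal I /\
  (exists g, Sstar g /\ ~ I g) /\
  (forall J, is_ideal J -> (forall f, I f -> J f) ->
     (forall f, J f <-> I f) \/ (forall f, Sstar f -> J f)).

Lemma pos_pair_nonzero (t u : R) : 0 < t -> (t, u) <> (0, 0).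
Proof. intros Ht E; injection E; intros; lra. Qed.

Definition gam (lam t : R) (Ht : 0 < t) : M :=
  exist _ (t, lam * exp (- / t)) (pos_pair_nonzero t _ Ht).

Definition alp (t : R) (Ht : 0 < t) : M :=
  exist _ (t, 0) (pos_pair_nonzero t _ Ht).

Definition lim_0plus (c : forall t : R, 0 < t -> M) (f : M -> R) (L : R) : Prop :=
  forall eps, 0 < eps -> exists delta, 0 < delta /\
    forall t (Ht : 0 < t), t < delta -> Rabs (f (c t Ht) - L) < eps.

(* Main.v *)
Require Import Defs.
From Stdlib Require Import Reals Lra ProofIrrelevance Classical FunctionalExtensionality.
Ltac slra := lra.
Ltac snra := nra.
Ltac sring := ring.
Ltac sfield := field.
From mathcomp Require Import all_boot all_order all_algebra.
From mathcomp Require Import ordered_qelim qe_rcf.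
From mathcomp Require Import Rstruct ring lra.
Set Implicit Arguments. Unset Strict Implicit. Unset Printing Implicit Defensive.
Import Order.TTheory GRing.Theory Num.Theory Num.Def.
Local Open Scope R_scope.

Section QEpart.
Local Open Scope ring_scope.

Fixpoint trT (i j k : nat) (p : poly3) : GRing.term R :=
  match p with
  | PX => GRing.Var _ i | PY => GRing.Var _ j | PZ => GRing.Var _ k
  | PConst c => GRing.Const c
  | PAdd p q => GRing.Add (trT i j k p) (trT i j k q)
  | PMul p q => GRing.Mul (trT i j k p) (trT i j k q)
  | PNeg p => GRing.Opp (trT i j k p)
  end.

Lemma trT_eval i j k p (e : seq R) :
  GRing.eval e (trT i j k p) = peval p e`_i e`_j e`_k.
Proof. by elim: p => //= [p IHp q IHq|p IHp q IHq|p IHp]; rewrite ?IHp ?IHq. Qed.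

Lemma trT_r i j k p : GRing.rterm (trT i j k p).
Proof. induction p; simpl; auto; apply/andP; split; auto. Qed.

Fixpoint trF (i j k : nat) (f : sa_formula) : ord.formula R :=
  match f with
  | FPos p => ord.Lt (GRing.Const 0) (trT i j k p)
  | FZero p => ord.Equal (trT i j k p) (GRing.Const 0)
  | FAnd a b => ord.And (trF i j k a) (trF i j k b)
  | FOr a b => ord.Or (trF i j k a) (trF i j k b)
  | FNot a => ord.Not (trF i j k a)
  end.

Lemma trF_holds i j k f (e : seq R) :
  ord.holds e (trF i j k f) <-> feval f e`_i e`_j e`_k.
Proof.
elim: f => /= [p|p|a IHa b IHb|a IHa b IHb|a IHa].
- rewrite trT_eval; split => [/RltP|/RltP] //.
- by rewrite trT_eval.
- by rewrite IHa IHb.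
- by rewrite IHa IHb.
- by rewrite IHa.
Qed.

Lemma trF_r i j k f : ord.rformula (trF i j k f).
Proof. by elim: f => /= [p|p|a -> b ->|a -> b ->|a ->] //; rewrite trT_r. Qed.

Fixpoint pexp (p : poly3) (n : nat) : poly3 :=
  match n with O => PConst 1 | S m => PMul p (pexp p m) end.

Fixpoint bkT (t : GRing.term R) : poly3 :=
  match t with
  | GRing.Var n => match n with 0 => PX | 1 => PY | 2 => PZ | _ => PConst 0 end
  | GRing.Const c => PConst c
  | GRing.NatConst n => PConst (n%:R)
  | GRing.Add a b => PAdd (bkT a) (bkT b)
  | GRing.Opp a => PNeg (bkT a)
  | GRing.NatMul a n => PMul (bkT a) (PConst n%:R)
  | GRing.Mul a b => PMul (bkT a) (bkT b)
  | GRing.Inv _ => PConst 0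
  | GRing.Exp a n => pexp (bkT a) n
  end.

Lemma bkT_eval t x y z : GRing.rterm t ->
  peval (bkT t) x y z = GRing.eval [:: x; y; z] t.
Proof.
elim: t => /=.
- by move=> n _; case: n => [|[|[|n]]] //=; rewrite nth_nil.
- by [].
- by [].
- by move=> a IHa b IHb /andP[ra rb]; rewrite IHa // IHb.
- by move=> a IHa ra; rewrite IHa.
- by move=> a IHa n ra; rewrite IHa // ?mul1r; exact: mulr_natr.
- by move=> a IHa b IHb /andP[ra rb]; rewrite IHa // IHb.
- by [].
- move=> a IHa n ra; rewrite -IHa //; elim: n => [|n IHn] /=; first by rewrite expr0.
  by rewrite exprS IHn.
Qed.

Fixpoint bkF (f : ord.formula R) : sa_formula :=
  match f with
  | ord.Bool true => FZero (PConst 0)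
  | ord.Bool false => FPos (PConst 0)
  | ord.Equal a b => FZero (PAdd (bkT a) (PNeg (bkT b)))
  | ord.Lt a b => FPos (PAdd (bkT b) (PNeg (bkT a)))
  | ord.Le a b => FOr (FPos (PAdd (bkT b) (PNeg (bkT a))))
                      (FZero (PAdd (bkT b) (PNeg (bkT a))))
  | ord.And a b => FAnd (bkF a) (bkF b)
  | ord.Or a b => FOr (bkF a) (bkF b)
  | ord.Implies a b => FOr (FNot (bkF a)) (bkF b)
  | ord.Not a => FNot (bkF a)
  | _ => FZero (PConst 0)
  end.

Lemma bkF_eval f x y z : ord.qf_form f -> ord.rformula f ->
  feval (bkF f) x y z <-> ord.qf_eval [:: x; y; z] f.
Proof.
elim: f => /=.
- by case => /=; split => // h; exfalso; slra.
- move=> a b _ /andP[ra rb]; rewrite !bkT_eval // ?RplusE ?RoppE; split.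
    by move=> h; apply/eqP; apply/subr0_eq.
  by move/eqP => ->; rewrite subrr.
- move=> a b _ /andP[ra rb]; rewrite !bkT_eval // ?RplusE ?RoppE; split.
    by move/RltP; rewrite subr_gt0.
  by move=> h; apply/RltP; rewrite subr_gt0.
- move=> a b _ /andP[ra rb]; rewrite !bkT_eval // ?RplusE ?RoppE; split.
    case=> [/RltP|]; first by rewrite subr_gt0 => /ltW.
    by move/subr0_eq => ->.
  rewrite le_eqVlt => /orP[/eqP ->|h]; first by right; rewrite subrr.
  by left; apply/RltP; rewrite subr_gt0.
- by [].
- move=> a IHa b IHb /andP[qa qb] /andP[ra rb]; rewrite IHa // IHb //.
  by split => [[-> ->]|/andP[-> ->]].
- move=> a IHa b IHb /andP[qa qb] /andP[ra rb]; rewrite IHa // IHb //.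
  by split => [[->|->]|/orP[->|->]]; rewrite ?orbT; auto.
- move=> a IHa b IHb /andP[qa qb] /andP[ra rb]; rewrite IHa // IHb //.
  by case: (ord.qf_eval _ a); case: (ord.qf_eval _ b); split => //=; intuition.
- move=> a IHa qa ra; rewrite IHa //.
  by case: (ord.qf_eval _ a); split.
- by [].
- by [].
Qed.

Lemma QE_semialg (f : ord.formula R) : ord.rformula f ->
  semialgebraic3 (fun x y z => ord.holds [:: x; y; z] f).
Proof.
move=> rf.
have /andP[qq rq] := ord.quantifier_elim_wf (@wf_QE_wproj R) rf.
exists (bkF (ord.quantifier_elim (@wproj R) f)) => x y z.
rewrite bkF_eval //.
by split => [/(ord.quantifier_elim_rformP (@wf_QE_wproj R) (@valid_QE_wproj R))|]
  => h; [apply h | apply/(ord.quantifier_elim_rformP (@wf_QE_wproj R) (@valid_QE_wproj R))].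
Qed.

End QEpart.



Lemma fM_irr (f : M -> R) x y (H1 H2 : (x, y) <> (0, 0)) :
  f (exist _ (x, y) H1) = f (exist _ (x, y) H2).
Proof. by rewrite (proof_irrelevance _ H1 H2). Qed.

Lemma sa_binop (f g : M -> R) (op : R -> R -> R)
  (top : GRing.term R -> GRing.term R -> GRing.term R) :
  (forall a b, GRing.rterm a -> GRing.rterm b -> GRing.rterm (top a b)) ->
  (forall e a b, GRing.eval e (top a b) = op (GRing.eval e a) (GRing.eval e b)) ->
  semialgebraic_fun f -> semialgebraic_fun g ->
  semialgebraic_fun (fun p => op (f p) (g p)).
Proof.
move=> Htop Hev [phi Hphi] [psi Hpsi].
pose F := ord.Exists 3 (ord.Exists 4 (ord.And (trF 0 1 3 phi)
   (ord.And (trF 0 1 4 psi)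
      (ord.Equal (GRing.Var _ 2) (top (GRing.Var _ 3) (GRing.Var _ 4)))))).
have rF : ord.rformula F by rewrite /= !trF_r Htop.
have [chi Hchi] := QE_semialg rF.
exists chi => x y z; rewrite -Hchi /F /=.
split.
- case=> H ->.
  exists (f (exist _ (x, y) H)), (g (exist _ (x, y) H)).
  rewrite !trF_holds /= Hev /=.
  split; first by apply/Hphi; exists H.
  by split; first by apply/Hpsi; exists H.
- case=> u [v]; rewrite !trF_holds /= Hev /=.
  case=> /Hphi [H1 ->] [/Hpsi [H2 ->] ->].
  by exists H1; rewrite (fM_irr g H2 H1).
Qed.

Lemma sa_gt (f : M -> R) : semialgebraic_fun f ->
  semialgebraic3 (fun x y z => exists H, z < f (exist _ (x, y) H)).
Proof.
move=> [phi Hphi].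
pose F := ord.Exists 3 (ord.And (trF 0 1 3 phi)
      (ord.Lt (GRing.Var _ 2) (GRing.Var _ 3))).
have rF : ord.rformula F by rewrite /= !trF_r.
have [chi Hchi] := QE_semialg rF.
exists chi => x y z; rewrite -Hchi /F /=.
split.
- case=> H hz.
  exists (f (exist _ (x, y) H)).
  rewrite !trF_holds /=.
  split; first by apply/Hphi; exists H.
  by apply/RltP.
- case=> u; rewrite !trF_holds /=.
  case=> /Hphi [H1 ->] /RltP hz.
  by exists H1.
Qed.

Lemma sa_const (c : R) : semialgebraic_fun (fun _ => c).
Proof.
exists (FAnd (FZero (PAdd PZ (PNeg (PConst c)))) (FNot (FAnd (FZero PX) (FZero PY)))).
move=> x y z /=; split.
- case=> H ->; split; first sring.
  by case=> hx hy; apply: H; rewrite hx hy.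
- case=> hz hxy; have H : (x, y) <> (0, 0).
    by case=> hx hy; apply: hxy; split.
  by exists H; slra.
Qed.


Section Wedge.
Local Open Scope ring_scope.

Lemma sg_pert (d u : R) : `|d| < `|u| -> sgr (u + d) = sgr u.
Proof.
move=> h; have h1 := ler_norm d; have h2 := ler_norm (- d); rewrite normrN in h2.
case: (ltgtP u 0) => hu.
- rewrite (ltr0_norm hu) in h.
  have : u + d < 0 by lra.
  by move=> hd; rewrite (ltr0_sg hd) (ltr0_sg hu).
- rewrite (gtr0_norm hu) in h.
  have : 0 < u + d by lra.
  by move=> hd; rewrite (gtr0_sg hd) (gtr0_sg hu).
- by rewrite hu normr0 in h; have := normr_ge0 d; lra.
Qed.

Definition ev (P : {poly {poly R}}) (x y : R) : R := (map_poly (horner_eval x) P).[y].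

Lemma evD P Q x y : ev (P + Q) x y = ev P x y + ev Q x y.
Proof. by rewrite /ev rmorphD hornerD. Qed.
Lemma evM P Q x y : ev (P * Q) x y = ev P x y * ev Q x y.
Proof. by rewrite /ev rmorphM hornerM. Qed.
Lemma evN P x y : ev (- P) x y = - ev P x y.
Proof. by rewrite /ev rmorphN hornerN. Qed.
Lemma evC (q : {poly R}) x y : ev q%:P x y = q.[x].
Proof. by rewrite /ev map_polyC hornerC ?horner_evalE. Qed.
Lemma evX x y : ev 'X x y = y.
Proof. by rewrite /ev map_polyX hornerX. Qed.
Lemma evXn n x y : ev ('X^n) x y = y ^+ n.
Proof.
elim: n => [|n IH]; first by rewrite !expr0 /ev rmorph1 hornerC.
by rewrite !exprS evM IH evX.
Qed.

Fixpoint toPP (c : R) (p : poly3) : {poly {poly R}} :=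
  match p with
  | PX => ('X)%:P
  | PY => 'X
  | PZ => (c%:P)%:P
  | PConst a => (a%:P)%:P
  | PAdd p q => toPP c p + toPP c q
  | PMul p q => toPP c p * toPP c q
  | PNeg p => - toPP c p
  end.

Lemma toPP_ev c p x y : ev (toPP c p) x y = peval p x y c.
Proof.
elim: p => /=.
- by rewrite evC hornerX.
- by rewrite evX.
- by rewrite evC hornerC.
- by move=> a; rewrite evC hornerC.
- by move=> p IHp q IHq; rewrite evD IHp IHq.
- by move=> p IHp q IHq; rewrite evM IHp IHq.
- by move=> p IHp; rewrite evN IHp.
Qed.

Definition bnd (p : {poly R}) : R := \sum_(i < size p) `|p`_i|.

Lemma bnd_ge0 p : 0 <= bnd p.
Proof. by apply: sumr_ge0 => i _; apply: normr_ge0. Qed.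

Lemma horner_le_bnd p x : `|x| <= 1 -> `|p.[x]| <= bnd p.
Proof.
move=> hx; rewrite horner_coef; apply: le_trans (ler_norm_sum _ _ _) _.
apply: ler_sum => i _; rewrite normrM normrX.
have h1 : `|x| ^+ i <= 1 by apply: exprn_ile1.
have h0 : 0 <= `|x| ^+ i by apply: exprn_ge0.
have := normr_ge0 p`_i; nra.
Qed.

Definition bnd2 (P : {poly {poly R}}) : R := \sum_(i < size P) bnd P`_i.

Lemma bnd2_ge0 P : 0 <= bnd2 P.
Proof. by apply: sumr_ge0 => i _; apply: bnd_ge0. Qed.

Lemma ev_le_bnd2 P x y : `|x| <= 1 -> `|y| <= 1 -> `|ev P x y| <= bnd2 P.
Proof.
move=> hx hy; rewrite /ev (@horner_coef_wide _ (size P)); last first.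
  by rewrite /map_poly; apply: size_poly.
apply: le_trans (ler_norm_sum _ _ _) _.
apply: ler_sum => i _; rewrite coef_map /= ?horner_evalE normrM normrX.
have h1 : `|y| ^+ i <= 1 by apply: exprn_ile1.
have h0 : 0 <= `|y| ^+ i by apply: exprn_ge0.
have := horner_le_bnd P`_i hx; have := normr_ge0 (P`_i).[x]; nra.
Qed.


Lemma split0 (p : {poly R}) : p = (p`_0)%:P + drop_poly 1 p * 'X.
Proof.
rewrite -[LHS](poly_take_drop 1) expr1; congr (_ + _).
by apply/polyP => i; rewrite !coefE; case: i.
Qed.

Lemma split0P (P : {poly {poly R}}) : P = (P`_0)%:P + drop_poly 1 P * 'X.
Proof.
rewrite -[LHS](poly_take_drop 1) expr1; congr (_ + _).
by apply/polyP => i; rewrite !coefE; case: i.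
Qed.

Lemma poly_sign (P : {poly {poly R}}) : exists (eps : R) (N : nat),
  [/\ 0 < eps, eps <= 1,
  (exists s : R, forall x y : R, 0 < x < eps -> 0 < y < x ^+ N -> sgr (ev P x y) = s) &
  (exists s : R, forall x : R, 0 < x < eps -> sgr (ev P x 0) = s)].
Proof.
have [->|P0] := eqVneq P 0.
  by exists 1, 0%N; split => //; exists 0 => *; rewrite /ev rmorph0 horner0 sgr0.
have [j [P1 /implyP/(_ P0) nr EP]] := multiplicity_XsubC P 0.
rewrite polyC0 subr0 in EP.
set Q := P1`_0.
have Q0 : Q != 0 by move: nr; rewrite /root horner_coef0.
have [k [q /implyP/(_ Q0) nq EQ]] := multiplicity_XsubC Q 0.
rewrite polyC0 subr0 in EQ.
set a := q`_0.
have a0 : a != 0 by move: nq; rewrite /root horner_coef0.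
set P2 := drop_poly 1 P1.
set q2 := drop_poly 1 q.
have E1 x y : ev P x y = ev P1 x y * y ^+ j by rewrite EP evM evXn.
have E2 x y : ev P1 x y = Q.[x] + ev P2 x y * y.
  by rewrite {1}(split0P P1) evD evC evM evX.
have E3 x : Q.[x] = q.[x] * x ^+ k by rewrite EQ hornerM hornerXn.
have E4 x : q.[x] = a + q2.[x] * x.
  by rewrite {1}(split0 q) hornerD hornerC hornerM hornerX.
set B := bnd2 P2; set Bq := bnd q2.
have B0 : 0 <= B by apply: bnd2_ge0.
have Bq0 : 0 <= Bq by apply: bnd_ge0.
have aP : 0 < `|a| by rewrite normr_gt0.
set e1 := `|a| / (4 * (B + 1)); set e2 := `|a| / (4 * (Bq + 1)).
have e1P : 0 < e1 by apply: divr_gt0 => //; lra.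
have e2P : 0 < e2 by apply: divr_gt0 => //; lra.
have He1 x : x < e1 -> x * (4 * (B + 1)) < `|a|.
  by move=> h; rewrite -ltr_pdivlMr //; lra.
have He2 x : x < e2 -> x * (4 * (Bq + 1)) < `|a|.
  by move=> h; rewrite -ltr_pdivlMr //; lra.
set eps := Num.min 1 (Num.min e1 e2).
have epsP : 0 < eps by rewrite !lt_min ltr01 e1P e2P.
have eps1 : eps <= 1 by rewrite ge_min lexx.
have key x y : 0 < x < eps -> 0 <= y < x ^+ k.+1 -> sgr (ev P1 x y) = sgr a.
  move=> /andP[x0 xe] /andP[y0 yx].
  move: xe; rewrite !lt_min => /and3P[x1 xe1 xe2].
  have X0 : 0 < x ^+ k by apply: exprn_gt0.
  have X1 : x ^+ k <= 1 by apply: exprn_ile1; lra.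
  set X := x ^+ k in X0 X1.
  have w : x ^+ k.+1 = x * X by rewrite exprS.
  rewrite w in yx.
  rewrite E2 E3 E4.
  set u := q2.[x]; set v := ev P2 x y.
  have hu : `|u| <= Bq by apply: horner_le_bnd; rewrite ger0_norm; lra.
  have hv : `|v| <= B.
    apply: ev_le_bnd2; rewrite ger0_norm; try lra. nra.
  have eq1 : (a + u * x) * X + v * y = a * X + (u * (x * X) + v * y) by ring.
  rewrite eq1 sg_pert; last first.
    have h1 := He1 x xe1; have h2 := He2 x xe2.
    have h3 : (x * X) * (4 * (B + 1)) < `|a| * X by nra.
    have h4 : (x * X) * (4 * (Bq + 1)) < `|a| * X by nra.
    have h5 : `|u * (x * X)| <= Bq * (x * X).
      rewrite normrM (ger0_norm (x := x * X)); last by nra.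
      by apply: ler_wpM2r => //; nra.
    have h6 : `|v * y| <= B * (x * X).
      rewrite normrM (ger0_norm (x := y)) //.
      have := normr_ge0 v; nra.
    have h7 := ler_normD (u * (x * X)) (v * y).
    rewrite normrM (gtr0_norm X0).
    have hxX : 0 < x * X by nra.
    have hb1 : 0 <= B * (x * X) by nra.
    have hb2 : 0 <= Bq * (x * X) by nra.
    lra.
  by rewrite sgrM (gtr0_sg X0) mulr1.
exists eps, k.+1; split => //.
  exists (sgr a) => x y hx /andP[y0 yx].
  rewrite E1 sgrM key //; last by rewrite yx ltW.
  by rewrite (gtr0_sg (exprn_gt0 j y0)) mulr1.
exists (if j == 0%N then sgr a else 0) => x hx.
rewrite E1; case: j {E1 EP} => [|j]; first by rewrite expr0 mulr1 key // lexx exprn_gt0 //; case/andP: hx.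
by rewrite expr0n /= mulr0 sgr0.
Qed.

End Wedge.



Lemma pow_anti (x : R) (n m : nat) : 0 <= x -> x <= 1 -> (n <= m)%N -> x ^ m <= x ^ n.
Proof.
move=> h0 h1 nm; rewrite !RpowE; apply/RleP; apply: ler_wiXn2l => //; by apply/RleP.
Qed.

Definition wedgeP (F : R -> R -> Prop) := exists (eps : R) (N : nat),
  0 < eps /\ eps <= 1 /\
  (exists b : Prop, forall x y : R, 0 < x < eps -> 0 < y < x ^ N -> (F x y <-> b)) /\
  (exists b : Prop, forall x : R, 0 < x < eps -> (F x 0 <-> b)).

Lemma wedge_sign (p : poly3) (c : R) : exists (eps : R) (N : nat),
  0 < eps /\ eps <= 1 /\
  (exists s : R, forall x y : R, 0 < x < eps -> 0 < y < x ^ N -> sgr (peval p x y c) = s) /\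
  (exists s : R, forall x : R, 0 < x < eps -> sgr (peval p x 0 c) = s).
Proof.
have [eps [N [e0 e1 [s1 H1] [s2 H2]]]] := poly_sign (toPP c p).
exists eps, N; split; first by apply/RltP.
split; first by apply/RleP.
split.
- exists s1 => x y [x0 xe] [y0 yx]; rewrite -toPP_ev; apply: H1.
  + by apply/andP; split; apply/RltP.
  + by apply/andP; split; apply/RltP; rewrite -?RpowE.
- exists s2 => x [x0 xe]; rewrite -toPP_ev; apply: H2.
  by apply/andP; split; apply/RltP.
Qed.

Lemma wedge (phi : sa_formula) (c : R) : wedgeP (fun x y => feval phi x y c).
Proof.
elim: phi => [p|p|a IHa b IHb|a IHa b IHb|a IHa].
- have [eps [N [e0 [e1 [[s1 H1] [s2 H2]]]]]] := wedge_sign p c.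
  exists eps, N; do 2 (split => //); split.
  + exists (s1 = 1) => x y hx hy /=; rewrite -(H1 x y hx hy).
    split => [/RltP h|h]; first by apply/eqP; rewrite sgr_cp0.
    by apply/RltP; rewrite -sgr_cp0 h.
  + exists (s2 = 1) => x hx /=; rewrite -(H2 x hx).
    split => [/RltP h|h]; first by apply/eqP; rewrite sgr_cp0.
    by apply/RltP; rewrite -sgr_cp0 h.
- have [eps [N [e0 [e1 [[s1 H1] [s2 H2]]]]]] := wedge_sign p c.
  exists eps, N; do 2 (split => //); split.
  + exists (s1 = 0) => x y hx hy /=; rewrite -(H1 x y hx hy).
    split => [h|/eqP]; first by rewrite h sgr0.
    by rewrite sgr_eq0 => /eqP.
  + exists (s2 = 0) => x hx /=; rewrite -(H2 x hx).
    split => [h|/eqP]; first by rewrite h sgr0.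
    by rewrite sgr_eq0 => /eqP.
- have [e1 [N1 [e10 [e11 [[b1 H1] [b2 H2]]]]]] := IHa.
  have [e2 [N2 [e20 [e21 [[b3 H3] [b4 H4]]]]]] := IHb.
  exists (Rmin e1 e2), (maxn N1 N2).
  have m1 := Rmin_l e1 e2; have m2 := Rmin_r e1 e2.
  split; first by apply: Rmin_glb_lt.
  split; first slra.
  split.
  + exists (b1 /\ b3) => x y [x0 xe] [y0 yx] /=.
    have hp1 : x ^ (maxn N1 N2) <= x ^ N1 by apply: pow_anti; [slra|slra|apply: leq_maxl].
    have hp2 : x ^ (maxn N1 N2) <= x ^ N2 by apply: pow_anti; [slra|slra|apply: leq_maxr].
    have hx1 : 0 < x < e1 by slra.
    have hx2 : 0 < x < e2 by slra.
    have hy1 : 0 < y < x ^ N1 by slra.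
    have hy2 : 0 < y < x ^ N2 by slra.
    rewrite (H1 x y hx1 hy1) (H3 x y hx2 hy2); reflexivity.
  + exists (b2 /\ b4) => x [x0 xe] /=.
    have hx1 : 0 < x < e1 by slra.
    have hx2 : 0 < x < e2 by slra.
    rewrite (H2 x hx1) (H4 x hx2); reflexivity.
- have [e1 [N1 [e10 [e11 [[b1 H1] [b2 H2]]]]]] := IHa.
  have [e2 [N2 [e20 [e21 [[b3 H3] [b4 H4]]]]]] := IHb.
  exists (Rmin e1 e2), (maxn N1 N2).
  have m1 := Rmin_l e1 e2; have m2 := Rmin_r e1 e2.
  split; first by apply: Rmin_glb_lt.
  split; first slra.
  split.
  + exists (b1 \/ b3) => x y [x0 xe] [y0 yx] /=.
    have hp1 : x ^ (maxn N1 N2) <= x ^ N1 by apply: pow_anti; [slra|slra|apply: leq_maxl].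
    have hp2 : x ^ (maxn N1 N2) <= x ^ N2 by apply: pow_anti; [slra|slra|apply: leq_maxr].
    have hx1 : 0 < x < e1 by slra.
    have hx2 : 0 < x < e2 by slra.
    have hy1 : 0 < y < x ^ N1 by slra.
    have hy2 : 0 < y < x ^ N2 by slra.
    rewrite (H1 x y hx1 hy1) (H3 x y hx2 hy2); reflexivity.
  + exists (b2 \/ b4) => x [x0 xe] /=.
    have hx1 : 0 < x < e1 by slra.
    have hx2 : 0 < x < e2 by slra.
    rewrite (H2 x hx1) (H4 x hx2); reflexivity.
- have [e1 [N1 [e10 [e11 [[b1 H1] [b2 H2]]]]]] := IHa.
  exists e1, N1; do 2 (split => //); split.
  + by exists (~ b1) => x y hx hy /=; rewrite (H1 x y hx hy).
  + by exists (~ b2) => x hx /=; rewrite (H2 x hx).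
Qed.


Lemma exp_mul_nat (m : nat) (b : R) : exp (INR m * b) = exp b ^ m.
Proof.
elim: m => [|m IH]; first by rewrite /= Rmult_0_l exp_0.
rewrite S_INR Rmult_plus_distr_r Rmult_1_l exp_plus IH /=; sring.
Qed.

Lemma exp_bound (N : nat) (lam : R) : 0 < lam ->
  exists d, 0 < d /\ forall t, 0 < t < d -> lam * exp (- / t) < t ^ N.
Proof.
move=> hl.
set m := S N; set K := INR m.
have K0 : 0 < K by apply: lt_0_INR; rewrite /m; apply: Nat.lt_0_succ.
have KmP : 0 < K ^ m by apply: pow_lt.
exists (/ (lam * K ^ m + 1)); split.
  by apply: Rinv_0_lt_compat; have := Rmult_lt_0_compat _ _ hl KmP; slra.
move=> t [t0 td].
set b := / (K * t).
have b0 : 0 < b by apply: Rinv_0_lt_compat; apply: Rmult_lt_0_compat.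
have eb : b < exp b by have := exp_ineq1 b ltac:(slra); slra.
have E1 : exp (/ t) = exp b ^ m.
  rewrite -exp_mul_nat; congr exp; rewrite /b -/K; sfield; slra.
have E2 : b ^ m <= exp b ^ m by apply: pow_incr; slra.
have bm0 : 0 < b ^ m by apply: pow_lt.
have E3 : exp (- / t) <= / b ^ m.
  rewrite exp_Ropp E1; apply: Rinv_le_contravar => //.
have E4 : / b ^ m = K ^ m * t ^ m.
  rewrite /b -pow_inv Rinv_inv Rpow_mult_distr //.
have tN : 0 < t ^ N by apply: pow_lt.
have tm : t ^ m = t * t ^ N by [].
have h1 : lam * K ^ m * t < 1.
  have hd : t * (lam * K ^ m + 1) < 1.
    have hp : 0 < lam * K ^ m + 1 by have := Rmult_lt_0_compat _ _ hl KmP; slra.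
    apply: (Rmult_lt_reg_r (/ (lam * K ^ m + 1))); first by apply: Rinv_0_lt_compat.
    by rewrite Rmult_assoc Rinv_r ?Rmult_1_r ?Rmult_1_l; slra.
  have := Rmult_lt_0_compat _ _ t0 hl; snra.
have h2 : lam * exp (- / t) <= lam * (K ^ m * t ^ m).
  by apply: Rmult_le_compat_l; slra.
rewrite E4 in E3.
have : lam * (K ^ m * t ^ m) = (lam * K ^ m * t) * t ^ N by rewrite tm; sring.
snra.
Qed.


Lemma gt_wedge (f : M -> R) (c : R) : semialgebraic_fun f ->
  exists (eps : R) (N : nat), 0 < eps /\ eps <= 1 /\
  (exists b : Prop, forall x y (Hx : 0 < x), x < eps -> 0 < y < x ^ N ->
      (c < f (exist _ (x, y) (pos_pair_nonzero x y Hx)) <-> b)) /\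
  (exists b : Prop, forall x (Hx : 0 < x), x < eps ->
      (c < f (exist _ (x, 0) (pos_pair_nonzero x 0 Hx)) <-> b)).
Proof.
move=> fs; have [chi Hchi] := sa_gt fs.
have [eps [N [e0 [e1 [[b1 H1] [b2 H2]]]]]] := wedge chi c.
have E x y (Hx : 0 < x) :
    feval chi x y c <-> c < f (exist _ (x, y) (pos_pair_nonzero x y Hx)).
  rewrite -Hchi; split; first by case=> H; rewrite (fM_irr f H (pos_pair_nonzero x y Hx)).
  by move=> h; exists (pos_pair_nonzero x y Hx).
exists eps, N; do 2 (split => //); split.
- exists b1 => x y Hx xe hy; rewrite -E; apply: H1 => //; slra.
- exists b2 => x Hx xe; rewrite -E; apply: H2; slra.
Qed.

Lemma line_limit (f : M -> R) : Sstar f -> exists L, lim_0plus alp f L.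
Proof.
case=> fc [[C hC] fs].
pose S c := exists d, 0 < d /\ forall t (Ht : 0 < t), t < d -> c < f (alp t Ht).
have Sb : bound S.
  exists C => c [d [d0 hd]].
  have h2 : 0 < d / 2 by slra.
  have := hd (d / 2) h2 ltac:(slra); have := Rle_abs (f (alp (d / 2) h2));
    have := hC (alp (d / 2) h2); slra.
have Sne : exists c, S c.
  exists (- C - 1), 1; split; first slra.
  move=> t Ht _; have := Rle_abs (- f (alp t Ht)); rewrite Rabs_Ropp.
  have := hC (alp t Ht); slra.
have [L [Lub Lleast]] := @completeness S Sb Sne.
exists L => eps e0.
have [c [[d1 [d10 hd1]] hc]] : exists c, S c /\ L - eps / 2 < c.
  apply: NNPP => H.
  have : L <= L - eps / 2.
    apply: Lleast => c Sc; apply: Rnot_lt_le => hc; apply: H; by exists c.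
  slra.
have [e [N [e0' [e1 [_ [b Hb]]]]]] := gt_wedge (L + eps / 2) fs.
have nb : ~ b.
  move=> hb.
  have : L + eps / 2 <= L.
    apply: Lub; exists e; split => // t Ht te.
    by apply/(Hb t Ht te).
  slra.
exists (Rmin d1 e); split; first by apply: Rmin_glb_lt.
move=> t Ht td.
have tmin1 := Rmin_l d1 e; have tmin2 := Rmin_r d1 e.
have h1 := hd1 t Ht ltac:(slra).
have h2 : ~ (L + eps / 2 < f (alp t Ht)).
  by move=> h; apply: nb; apply/(Hb t Ht ltac:(slra)).
apply: Rabs_def1; slra.
Qed.

Lemma dist_vert t s (Ht : 0 < t) : 0 <= s ->
  dist2 (alp t Ht) (exist _ (t, s) (pos_pair_nonzero t s Ht)) = s.
Proof.
move=> s0; rewrite /dist2 /Mx /My /=.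
have -> : (t - t) ^ 2 + (0 - s) ^ 2 = s ^ 2 by sring.
by rewrite sqrt_pow2.
Qed.

Lemma gam_limit (lam : R) (f : M -> R) (L : R) : 0 < lam -> Sstar f ->
  lim_0plus alp f L -> lim_0plus (gam lam) f L.
Proof.
move=> hl [fc [fb fs]] hL eps e0.
have [e1 [N1 [e10 [e11 [[b1 W1] _]]]]] := gt_wedge (L + eps / 2) fs.
have [e2 [N2 [e20 [e21 [[b2 W2] _]]]]] := gt_wedge (L - eps / 2) fs.
have [d0 [d00 hd0]] := hL (eps / 4) ltac:(slra).
have [d3 [d30 hd3]] := exp_bound (maxn N1 N2) hl.
exists (Rmin (Rmin e1 e2) (Rmin d0 d3)); split.
  by apply: Rmin_glb_lt; apply: Rmin_glb_lt.
move=> t Ht td.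
have m1 := Rmin_l (Rmin e1 e2) (Rmin d0 d3); have m2 := Rmin_r (Rmin e1 e2) (Rmin d0 d3).
have m3 := Rmin_l e1 e2; have m4 := Rmin_r e1 e2.
have m5 := Rmin_l d0 d3; have m6 := Rmin_r d0 d3.
set yg := lam * exp (- / t).
have yg0 : 0 < yg by apply: Rmult_lt_0_compat => //; apply: exp_pos.
have yg1 : yg < t ^ maxn N1 N2 by apply: hd3; slra.
have p1 : t ^ maxn N1 N2 <= t ^ N1 by apply: pow_anti; [slra|slra|apply: leq_maxl].
have p2 : t ^ maxn N1 N2 <= t ^ N2 by apply: pow_anti; [slra|slra|apply: leq_maxr].
have tN1 : 0 < t ^ N1 by apply: pow_lt.
have tN2 : 0 < t ^ N2 by apply: pow_lt.
have hL0 := hd0 t Ht ltac:(slra).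
have [dc [dc0 hdc]] := fc (alp t Ht) (eps / 4) ltac:(slra).
have hs s : 0 < s < dc ->
    Rabs (f (exist _ (t, s) (pos_pair_nonzero t s Ht)) - f (alp t Ht)) < eps / 4.
  move=> [s0 sd]; apply: hdc; rewrite dist_vert //; slra.
have G : gam lam t Ht = exist _ (t, yg) (pos_pair_nonzero t yg Ht) by [].
rewrite G.
have up : f (exist _ (t, yg) (pos_pair_nonzero t yg Ht)) <= L + eps / 2.
  apply: Rnot_lt_le => h.
  have hb : b1 by apply/(W1 t yg Ht ltac:(slra) ltac:(slra)).
  set s0 := Rmin dc (t ^ N1) / 2.
  have q1 := Rmin_l dc (t ^ N1); have q2 := Rmin_r dc (t ^ N1).
  have q0 : 0 < Rmin dc (t ^ N1) by apply: Rmin_glb_lt.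
  have h3 := (proj2 (W1 t s0 Ht ltac:(slra) ltac:(rewrite /s0; slra))) hb.
  have := hs s0 ltac:(rewrite /s0; slra).
  move=> h4; have h5 := Rabs_def2 _ _ h4; have h6 := Rabs_def2 _ _ hL0; slra.
have lo : L - eps / 2 < f (exist _ (t, yg) (pos_pair_nonzero t yg Ht)).
  apply: NNPP => h.
  have hb : ~ b2 by move=> hb; apply: h; apply/(W2 t yg Ht ltac:(slra) ltac:(slra)).
  set s0 := Rmin dc (t ^ N2) / 2.
  have q1 := Rmin_l dc (t ^ N2); have q2 := Rmin_r dc (t ^ N2).
  have q0 : 0 < Rmin dc (t ^ N2) by apply: Rmin_glb_lt.
  have h3 : ~ (L - eps / 2 < f (exist _ (t, s0) (pos_pair_nonzero t s0 Ht))).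
    by move=> h3; apply: hb; apply/(W2 t s0 Ht ltac:(slra) ltac:(rewrite /s0; slra)).
  have := hs s0 ltac:(rewrite /s0; slra).
  move=> h4; have h5 := Rabs_def2 _ _ h4; have h6 := Rabs_def2 _ _ hL0; slra.
apply: Rabs_def1; slra.
Qed.


Lemma Sstar_const (c : R) : Sstar (fun _ => c).
Proof.
split; first by move=> p e e0; exists 1; split; [slra|move=> q _; rewrite Rminus_diag Rabs_R0].
split; first by exists (Rabs c) => p; apply: Rle_refl.
exact: sa_const.
Qed.

Lemma Sstar_add (f g : M -> R) : Sstar f -> Sstar g -> Sstar (fun p => f p + g p).
Proof.
move=> [fc [[Cf hf] fs]] [gc [[Cg hg] gs]]; split.
  move=> p e e0.
  have [d1 [d10 h1]] := fc p (e / 2) ltac:(slra).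
  have [d2 [d20 h2]] := gc p (e / 2) ltac:(slra).
  exists (Rmin d1 d2); split; first by apply: Rmin_glb_lt.
  move=> q hq; have q1 := Rmin_l d1 d2; have q2 := Rmin_r d1 d2.
  have a1 := h1 q ltac:(slra); have a2 := h2 q ltac:(slra).
  have := Rabs_triang (f q - f p) (g q - g p).
  have -> : f q - f p + (g q - g p) = f q + g q - (f p + g p) by sring.
  slra.
split.
  exists (Cf + Cg) => p; have := Rabs_triang (f p) (g p); have := hf p; have := hg p; slra.
apply: (@sa_binop f g Rplus (fun a b => GRing.Add a b)) => //.
by move=> a b /= -> ->.
Qed.

Lemma Sstar_mul (f g : M -> R) : Sstar f -> Sstar g -> Sstar (fun p => f p * g p).
Proof.
move=> [fc [[Cf hf] fs]] [gc [[Cg hg] gs]]; split.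
  move=> p e e0.
  have Cf0 : 0 <= Cf by have := hf p; have := Rabs_pos (f p); slra.
  have Cg0 : 0 <= Cg by have := hg p; have := Rabs_pos (g p); slra.
  have k1 : 0 < e / (2 * (Cg + 1)) by apply: Rdiv_lt_0_compat; slra.
  have k2 : 0 < e / (2 * (Cf + 1)) by apply: Rdiv_lt_0_compat; slra.
  have [d1 [d10 h1]] := fc p _ k1.
  have [d2 [d20 h2]] := gc p _ k2.
  exists (Rmin d1 d2); split; first by apply: Rmin_glb_lt.
  move=> q hq; have q1 := Rmin_l d1 d2; have q2 := Rmin_r d1 d2.
  have a1 := h1 q ltac:(slra); have a2 := h2 q ltac:(slra).
  have -> : f q * g q - f p * g p = f q * (g q - g p) + g p * (f q - f p) by sring.
  apply: Rle_lt_trans (Rabs_triang _ _) _.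
  rewrite !Rabs_mult.
  have b1 : Rabs (f q) * Rabs (g q - g p) <= Cf * (e / (2 * (Cf + 1))).
    apply: Rmult_le_compat; try apply: Rabs_pos; [apply: hf | slra].
  have b2 : Rabs (g p) * Rabs (f q - f p) <= Cg * (e / (2 * (Cg + 1))).
    apply: Rmult_le_compat; try apply: Rabs_pos; [apply: hg | slra].
  have c1 : Cf * (e / (2 * (Cf + 1))) < e / 2.
    have -> : Cf * (e / (2 * (Cf + 1))) = e / 2 - e / (2 * (Cf + 1)) by sfield; slra.
    slra.
  have c2 : Cg * (e / (2 * (Cg + 1))) < e / 2.
    have -> : Cg * (e / (2 * (Cg + 1))) = e / 2 - e / (2 * (Cg + 1)) by sfield; slra.
    slra.
  slra.
split.
  exists (Cf * Cg) => p; rewrite Rabs_mult.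
  by apply: Rmult_le_compat; try apply: Rabs_pos; [apply: hf|apply: hg].
apply: (@sa_binop f g Rmult (fun a b => GRing.Mul a b)) => //.
by move=> a b /= -> ->.
Qed.

Section Lims.
Variable c : forall t : R, 0 < t -> M.

Lemma lim_const (a : R) : lim_0plus c (fun _ => a) a.
Proof. move=> e e0; exists 1; split; first slra. move=> t Ht _; rewrite Rminus_diag Rabs_R0; slra. Qed.

Lemma lim_add f g a b : lim_0plus c f a -> lim_0plus c g b ->
  lim_0plus c (fun p => f p + g p) (a + b).
Proof.
move=> hf hg e e0.
have [d1 [d10 h1]] := hf (e / 2) ltac:(slra).
have [d2 [d20 h2]] := hg (e / 2) ltac:(slra).
exists (Rmin d1 d2); split; first by apply: Rmin_glb_lt.
move=> t Ht td; have q1 := Rmin_l d1 d2; have q2 := Rmin_r d1 d2.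
have a1 := h1 t Ht ltac:(slra); have a2 := h2 t Ht ltac:(slra).
have := Rabs_triang (f (c Ht) - a) (g (c Ht) - b).
have -> : f (c Ht) - a + (g (c Ht) - b) = f (c Ht) + g (c Ht) - (a + b) by sring.
slra.
Qed.

Lemma lim_mul_bdd f g C : (forall p, Rabs (g p) <= C) -> lim_0plus c f 0 ->
  lim_0plus c (fun p => g p * f p) 0.
Proof.
move=> hg hf e e0.
have C0 : 0 <= C by have := hg (c Rlt_0_1); have := Rabs_pos (g (c Rlt_0_1)); slra.
have k : 0 < e / (C + 1) by apply: Rdiv_lt_0_compat; slra.
have [d [d0 hd]] := hf _ k.
exists d; split => // t Ht td.
have a1 := hd t Ht td; rewrite Rminus_0_r in a1; rewrite Rminus_0_r Rabs_mult.
have b1 : Rabs (g (c Ht)) * Rabs (f (c Ht)) <= C * (e / (C + 1)).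
  by apply: Rmult_le_compat; try apply: Rabs_pos; [apply: hg | slra].
have ee : e = C * (e / (C + 1)) + e / (C + 1) by sfield; slra.
slra.
Qed.

Lemma lim_unique f a b : lim_0plus c f a -> lim_0plus c f b -> a = b.
Proof.
move=> ha hb; apply: NNPP => hne.
have e0 : 0 < Rabs (a - b) / 2.
  have : 0 < Rabs (a - b) by apply: Rabs_pos_lt; slra.
  slra.
have [d1 [d10 h1]] := ha _ e0.
have [d2 [d20 h2]] := hb _ e0.
have t0 : 0 < Rmin d1 d2 / 2 by have := Rmin_glb_lt _ _ _ d10 d20; slra.
have q1 := Rmin_l d1 d2; have q2 := Rmin_r d1 d2.
have a1 := h1 _ t0 ltac:(slra); have a2 := h2 _ t0 ltac:(slra).
have := Rabs_triang (a - f (c t0)) (f (c t0) - b).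
rewrite -Rabs_Ropp in a1.
have -> : a - f (c t0) + (f (c t0) - b) = a - b by sring.
have ee : - (f (c t0) - a) = a - f (c t0) by sring.
rewrite ee in a1.
slra.
Qed.
End Lims.

Unset Implicit Arguments.
Theorem mainTheorem14 (lam : R) (Hlam : 0 < lam) :
  (forall f, Sstar f -> exists L : R, lim_0plus (gam lam) f L) /\
  is_maximal_ideal (fun f => Sstar f /\ lim_0plus (gam lam) f 0) /\
  (forall f, (Sstar f /\ lim_0plus (gam lam) f 0) <->
             (Sstar f /\ lim_0plus alp f 0)).
Proof.
have P1 : forall f, Sstar f -> exists L : R, lim_0plus (gam lam) f L.
  move=> f fS; have [L hL] := line_limit fS; exists L; exact: gam_limit.
split => //; split.
- split.
    split; first by move=> f [].
    split; first by split; [apply: Sstar_const | apply: lim_const].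
    split.
      move=> f g [fS fl] [gS gl]; split; first exact: Sstar_add.
      by have := lim_add fl gl; rewrite Rplus_0_r.
    move=> f g gS [fS fl]; split; first exact: Sstar_mul.
    have [_ [[C hC] _]] := gS; exact: lim_mul_bdd hC fl.
  split.
    exists (fun _ => 1); split; first exact: Sstar_const.
    move=> [_ h]; have := lim_unique h (lim_const (gam lam) 1); slra.
  move=> J [J1 [J2 [J3 J4]]] sub.
  case: (classic (exists g, J g /\ ~ (Sstar g /\ lim_0plus (gam lam) g 0))) => [[g [Jg nIg]]|H].
  + right => f fS.
    have gS := J1 g Jg.
    have [L hL] := P1 g gS.
    have L0 : L <> 0 by move=> L0; apply: nIg; split => //; move: hL; rewrite L0.
    pose h := fun p => g p + - L.
    have hS : Sstar h by apply: Sstar_add => //; apply: Sstar_const.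
    have hl : lim_0plus (gam lam) h 0.
      have := lim_add hL (lim_const (gam lam) (- L)); rewrite Rplus_opp_r; exact.
    have Jh := sub h (conj hS hl).
    have Jh' := J4 h (fun _ => -1) (Sstar_const (-1)) Jh.
    have JL := J3 _ _ Jg Jh'.
    have ee : (fun p => g p + -1 * h p) = (fun _ => L).
      by apply: functional_extensionality => p; rewrite /h; sring.
    rewrite ee in JL.
    have JF := J4 _ (fun p => f p * / L) (Sstar_mul fS (Sstar_const (/ L))) JL.
    have ee2 : (fun p => f p * / L * L) = f.
      by apply: functional_extensionality => p; sfield.
    rewrite ee2 in JF.
    exact: JF.
  + left => f; split; last exact: sub.
    move=> Jf; apply: NNPP => nI; apply: H; by exists f.
- move=> f; split.
  + move=> [fS fl]; split => //.
    have [L hL] := line_limit fS.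
    have e := lim_unique fl (gam_limit Hlam fS hL); rewrite -e in hL; exact hL.
  + move=> [fS fl]; split => //; exact: gam_limit.
Qed.
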